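(* Let $q,n,a,h,t$ be positive integers with $a\le q-1$, $h\le n$, and $a\le t\le ah$. Let $\mathcal C\subseteq[q]^n$ be an $(a,h,t)^\circ$-AED code. Then $|\mathcal C|\le\frac{q^n}{t+1}$.
   Context: $[q]=\{0,1,\dots,q-1\}$ and $+_q$ denotes coordinatewise addition modulo $q$. Cyclic asymmetric channel: an input $\mathbf x\in[q]^n$ can produce any output $\mathbf y=\mathbf x+_q\mathbf f$, where $\mathbf f\in[q]^n$ satisfies (1) $0\le f_i\le a$ for all $i$; (2) $\sum_{i=1}^n\mathbb 1_{\{f_i\ne0\}}\le h$; (3) $\sum_{i=1}^n f_i\le t$. These are called $(a,h,t)^\circ$-asymmetric errors; $\mathrm{Out}^\circ(\mathbf x)$ denotes the set of all such outputs. A code $\mathcal C\subseteq[q]^n$ is $(a,h,t)^\circ$-AED if for all $\mathbf x\in\mathcal C$ and $\mathbf y\in\mathrm{Out}^\circ(\mathbf x)$ with $\mathbf y\ne\mathbf x$, we have $\mathbf y\notin\mathcal C$. *)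

(* Defs.v *)
From mathcomp Require Import all_boot.
Set Implicit Arguments. Unset Strict Implicit. Unset Printing Implicit Defensive.

Definition word (q n : nat) := {ffun 'I_n -> 'I_q}.

Definition is_err (n a h t : nat) (f : {ffun 'I_n -> nat}) : bool :=
  [&& [forall i, f i <= a],
      #|[set i | f i != 0]| <= h &
      \sum_(i < n) f i <= t].

Definition in_out_cyc (q n a h t : nat) (x y : word q n) : Prop :=
  exists f : {ffun 'I_n -> nat},
    is_err a h t f /\ forall i, (y i : nat) = (x i + f i) %% q.

Definition cyc_AED (q n a h t : nat) (C : {set word q n}) : Prop :=
  forall x y : word q n, x \in C -> in_out_cyc a h t x y -> y != x -> y \notin C.

(* Main.v *)
Require Import Defs.
From mathcomp Require Import all_boot zify.

Lemma sumF a l m : \sum_(j < m) minn a (l - a*j) <= l.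
Proof.
elim: m l => [|m IH] l; first by rewrite big_ord0.
rewrite big_ord_recl /=.
have E : \sum_(i < m) minn a (l - a * (bump 0 i)) = \sum_(i < m) minn a ((l - a) - a * i).
  by apply: eq_bigr => i _; rewrite /bump /= add1n mulnS subnDA.
rewrite E muln0 subn0; have := IH (l - a); lia.
Qed.

Lemma modcancel q x y d : 0 < q -> x < q -> y < q ->
  (x + d) %% q = (y + d) %% q -> x = y.
Proof.
move=> q0 xq yq H.
have : x %% q = y %% q by apply/eqP; rewrite -(eqn_modDr d); apply/eqP.
by rewrite !modn_small.
Qed.

Lemma modshift q y d : 0 < d -> d < q -> y < q -> (y + d) %% q <> y.
Proof.
move=> d0 dq yq.
case: (ltnP (y + d) q) => h.
  rewrite modn_small //; lia.
have -> : y + d = 1 * q + (y + d - q) by lia.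
rewrite modnMDl modn_small; lia.
Qed.

Section S.
Variables (q n a h t : nat) (C : {set word q n}).
Hypotheses (q0 : 0 < q) (a0 : 0 < a) (aq : a <= q - 1) (hn : h <= n) (tah : t <= a * h)
  (aed : cyc_AED a h t C).

Definition F (k : nat) (i : 'I_n) : nat := minn a (k - a * i).

Lemma key k l (x y : word q n) : k < l -> l <= t -> x \in C -> y \in C ->
  (forall i, (x i + F k i) %% q = (y i + F l i) %% q) -> False.
Proof.
move=> kl lt xC yC H.
set g := [ffun i => F l i - F k i].
have Fle : forall i, F k i <= F l i by move=> i; rewrite /F; lia.
have Hout : in_out_cyc a h t y x.
  exists g; split.
    apply/and3P; split.
    - by apply/forallP => i; rewrite ffunE /F; lia.
    - have sub : [set i | g i != 0] \subset [set widen_ord hn j | j : 'I_h].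
        apply/subsetP => i; rewrite inE ffunE /F => nz.
        have ih : i < h.
          have : a * i < a * h by lia.
          by rewrite ltn_pmul2l.
        by apply/imsetP; exists (Ordinal ih) => //; apply: val_inj.
      apply: leq_trans (subset_leq_card sub) _.
      by apply: leq_trans (leq_imset_card _ _) _; rewrite card_ord.
    - apply: leq_trans _ lt; apply: leq_trans (sumF a l n).
      by apply: leq_sum => i _; rewrite ffunE /F; lia.
  move=> i; rewrite ffunE.
  have E : (x i + F k i) %% q = ((y i + (F l i - F k i)) %% q + F k i) %% q.
    by rewrite modnDml -addnA subnK.
  exact: (@modcancel _ _ _ _ q0 (ltn_ord _) (ltn_pmod _ q0) E).
have Hne : x != y.
  apply/eqP => exy; subst x.
  have ik : k %/ a < n.
    have : k %/ a < h by rewrite ltn_divLR //; lia.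
    lia.
  set i := Ordinal ik.
  have dpos : 0 < F l i - F k i.
    rewrite /F /=; have := leq_divM k a; have := ltn_ceil k a0; lia.
  have dq : F l i - F k i < q by rewrite /F; lia.
  have := @modshift _ _ _ dpos dq (ltn_ord (y i)).
  have := H i; move: (F l i) (F k i) (Fle i) => u v uv.
  move=> E; apply; apply/esym.
  have E2 : (y i + v) %% q = ((y i + (u - v)) %% q + v) %% q.
    by rewrite modnDml -addnA subnK // -E.
  exact: (@modcancel _ _ _ _ q0 (ltn_ord _) (ltn_pmod _ q0) E2).
by move: (@aed y x yC Hout Hne); rewrite xC.
Qed.
End S.

Theorem theorem5 (q n a h t : nat) (C : {set word q n}) :
  0 < q -> 0 < n -> 0 < a -> 0 < h -> 0 < t ->
  a <= q - 1 -> h <= n -> a <= t -> t <= a * h ->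
  cyc_AED a h t C ->
  #|C| * (t + 1) <= q ^ n.
Proof.
move=> q0 n0 a0 h0 t0 aq hn at' tah aed.
pose T (k : nat) (x : word q n) : word q n :=
  [ffun i => Ordinal (ltn_pmod (x i + F n a k i) q0)].
pose phi := fun p : 'I_(t+1) * word q n => T p.1 p.2.
have Hval : forall k x i, (T k x i : nat) = (x i + F n a k i) %% q.
  by move=> k x i; rewrite ffunE.
have inj : {in setX [set: 'I_(t+1)] C &, injective phi}.
  move=> [k x] [l y]; rewrite !inE /= => xC yC E.
  have Hi : forall i, (x i + F n a k i) %% q = (y i + F n a l i) %% q.
    by move=> i; rewrite -!Hval /phi /= in E *; rewrite E.
  have lk := ltn_ord k; have ll := ltn_ord l.
  case: (ltngtP k l) => [kl|lk'|kl].
  - exfalso; apply: (@key q n a h t C q0 a0 aq hn tah aed k l x y kl _ xC yC Hi); lia.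
  - exfalso; apply: (@key q n a h t C q0 a0 aq hn tah aed l k y x lk' _ yC xC) => [|i]; first lia.
    by rewrite Hi.
  - have ekl : k = l by apply: val_inj.
    subst l; congr (_, _); apply/ffunP => i; apply: val_inj.
    exact: (@modcancel _ _ _ _ q0 (ltn_ord _) (ltn_ord _) (Hi i)).
rewrite mulnC.
have -> : (t + 1) * #|C| = #|setX [set: 'I_(t+1)] C| by rewrite cardsX cardsT card_ord.
rewrite -(card_in_imset inj).
apply: leq_trans (max_card _) _.
by rewrite /word card_ffun !card_ord.
Qed.
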